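(* Fix any total budget $\mathrm{TB}\in\mathbb N_0$. Every dyadic rational game form $n/2^k$, with $n\in\mathbb Z$ and $k\in\mathbb N$, is a number.
   Context: Game forms are defined recursively: $G=\{G^{\mathcal L}\mid G^{\mathcal R}\}$ with finite sets of Left and Right options, and finite birthday. $0=\{\varnothing\mid\varnothing\}$, $1=\{0\mid\varnothing\}$. Dyadic game forms: $1/2^0=1$, for $k\in\mathbb N$, $1/2^k=\{0\mid 1/2^{k-1}\}$; for $n\in\mathbb N_0$, $n/2^k$ is the disjunctive sum of $n$ copies of $1/2^k$ (with $0/2^k=0$), and $-n/2^k=\overline{n/2^k}$, where the conjugate is $\bar G=\{\overline{G^{\mathcal R}}\mid\overline{G^{\mathcal L}}\}$. The budget set for total budget $\mathrm{TB}$ is $\mathcal B=\{0,\dots,\mathrm{TB},\hat 0,\dots,\widehat{\mathrm{TB}}\}$: state $p$ (resp. $\hat p$) means Left holds $p$ dollars and Right holds $\mathrm{TB}-p$, and Right (resp. Left) holds the tie-breaking marker. Play of $(G,\tilde p)$: at every position (terminal ones included) both players bid simultaneously, Left $\ell\in\{0,\dots,p\}$, Right $r\in\{0,\dots,\mathrm{TB}-p\}$. If Left holds the marker (state $\hat p$): if $\ell>r$ Left moves to $(G^L,\widehat{p-\ell})$, or, including the marker (allowed when $\ell\ge r$), to $(G^L,p-\ell)$; if $\ell=r$ Left wins, the marker passes to Right, play continues at $(G^L,p-\ell)$; if $\ell<r$ Right moves to $(G^R,\widehat{p+r})$. Symmetrically when Right holds the marker (state $p$): if $r>\ell$ Right moves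 to $(G^R,p+r)$ or, including the marker, to $(G^R,\widehat{p+r})$; if $r=\ell$ Right wins, the marker passes to Left, play continues at $(G^R,\widehat{p+r})$; if $r<\ell$ Left moves to $(G^L,p-\ell)$. A player who wins a bid but has no option loses. $o(G,\tilde p)\in\{\mathrm L,\mathrm R\}$ is the winner under optimal play; $\mathrm L>\mathrm R$. Disjunctive sum $G+H=\{G^{\mathcal L}+H,G+H^{\mathcal L}\mid G^{\mathcal R}+H,G+H^{\mathcal R}\}$. $G\ge H$ means $o(G+X,\tilde p)\ge o(H+X,\tilde p)$ for all game forms $X$ and all $\tilde p\in\mathcal B$; $G=H$ means $G\ge H$ and $H\ge G$; $G>H$ means $G\ge H$ and not $H\ge G$. A game is a number if it is equal (as a game) to a game form all of whose options are numbers and with $G^L<G<G^R$ for all Left options $G^L$ and Right options $G^R$; recursively, a game form $G$ is a number if all its options are numbers and $G^L<G<G^R$ for all $G^L\in G^{\mathcal L}$, $G^R\in G^{\mathcal R}$. *)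

(* Defs.v *)
From mathcomp Require Import all_boot all_algebra.
From Stdlib Require List.

Set Implicit Arguments.
Unset Strict Implicit.
Unset Printing Implicit Defensive.

(* A game form {G^L | G^R}: finite lists of Left and Right options.
   Finite birthday is automatic (well-founded inductive type). *)
Inductive game : Type := Game : seq game -> seq game -> game.

Definition leftOpts (G : game) : seq game := let: Game L _ := G in L.
Definition rightOpts (G : game) : seq game := let: Game _ R := G in R.

Definition g0 : game := Game [::] [::].
Definition g1 : game := Game [:: g0] [::].

Fixpoint gconj (G : game) : game :=
  match G with Game L R => Game (map gconj R) (map gconj L) end.

Fixpoint gadd (G H : game) {struct G} : game :=
  match G with
  | Game GL GR =>
      let fix aux (H : game) : game :=
        match H with
        | Game HL HR =>
            Game ([seq gadd gl H | gl <- GL] ++ map aux HL)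
                 ([seq gadd gr H | gr <- GR] ++ map aux HR)
        end in
      aux H
  end.

Fixpoint halfpow (k : nat) : game :=
  match k with
  | 0 => g1
  | k'.+1 => Game [:: g0] [:: halfpow k']
  end.

Fixpoint ncopies (n : nat) (G : game) : game :=
  match n with
  | 0 => g0
  | 0.+1 => G
  | n'.+1 => gadd (ncopies n' G) G
  end.

Definition dyadic (n : int) (k : nat) : game :=
  match n with
  | Posz m => ncopies m (halfpow k)
  | Negz m => gconj (ncopies m.+1 (halfpow k))
  end.

(* Outcome of the bidding play of (G, p~) with total budget TB.
   p = Left's budget (Right holds TB - p); lm = true means Left holds the
   tie-breaking marker (state p-hat), lm = false means Right holds it (state p).
   Result: true = L wins, false = R wins.  o(G,p~) = L iff Left has a bid l
   such that for every Right bid r, Left wins the continuation under optimal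
   play (the bidding game is determined). *)
Fixpoint outcome (TB : nat) (G : game) (p : nat) (lm : bool) {struct G} : bool :=
  match G with
  | Game GL GR =>
      let leftMoves (q : nat) (ms : seq bool) :=
        has (fun gl => has (fun m => outcome TB gl q m) ms) GL in
      let rightMoves (q : nat) (ms : seq bool) :=
        all (fun gr => all (fun m => outcome TB gr q m) ms) GR in
      let res (l r : nat) : bool :=
        if lm then
          (if r < l then leftMoves (p - l) [:: true; false]
           else if l == r then leftMoves (p - l) [:: false]
           else rightMoves (p + r) [:: true])
        else
          (if l < r then rightMoves (p + r) [:: false; true]
           else if l == r then rightMoves (p + r) [:: true]
           else leftMoves (p - l) [:: false]) in
      has (fun l => all (fun r => res l r) (iota 0 (TB - p).+1)) (iota 0 p.+1)
  end.

Definition gge (TB : nat) (G H : game) : Prop :=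
  forall (X : game) (p : nat) (lm : bool), p <= TB ->
    outcome TB (gadd H X) p lm -> outcome TB (gadd G X) p lm.

Definition geq (TB : nat) (G H : game) : Prop := gge TB G H /\ gge TB H G.
Definition ggt (TB : nat) (G H : game) : Prop := gge TB G H /\ ~ gge TB H G.

Inductive isNumber (TB : nat) : game -> Prop :=
  | isNumber_intro (G H : game) :
      geq TB G H ->
      (forall HL, List.In HL (leftOpts H) -> isNumber TB HL) ->
      (forall HR, List.In HR (rightOpts H) -> isNumber TB HR) ->
      (forall HL, List.In HL (leftOpts H) -> ggt TB H HL) ->
      (forall HR, List.In HR (rightOpts H) -> ggt TB HR H) ->
      isNumber TB G.

(* Main.v *)
Require Import Defs.
From mathcomp Require Import all_boot all_algebra.
From mathcomp Require Import zify.
Import Defs.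
Unset Strict Implicit.
Unset Printing Implicit Defensive.

Set Implicit Arguments.

Fixpoint game_ind2 (P : game -> Prop)
  (f : forall GL GR, List.Forall P GL -> List.Forall P GR -> P (Game GL GR)) (G : game) : P G :=
  match G with
  | Game GL GR =>
    f GL GR
      ((fix F (l : seq game) : List.Forall P l :=
         match l with nil => List.Forall_nil _ | x :: l' => List.Forall_cons _ (game_ind2 f x) (F l') end) GL)
      ((fix F (l : seq game) : List.Forall P l :=
         match l with nil => List.Forall_nil _ | x :: l' => List.Forall_cons _ (game_ind2 f x) (F l') end) GR)
  end.

Lemma game_ind3 (P : game -> Prop) :
  (forall GL GR, (forall x, List.In x GL -> P x) -> (forall x, List.In x GR -> P x) -> P (Game GL GR)) ->
  forall G, P G.
Proof.
move=> H; apply: game_ind2 => GL GR HL HR; apply: H; apply/List.Forall_forall; done.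
Qed.

Lemma hasIn (T : Type) (a : pred T) (s : seq T) : has a s <-> exists x, List.In x s /\ a x.
Proof.
elim: s => [|y s IH] /=; first by split=> // [[x []]].
split.
  case/orP=> [Hy|/IH [x [Hx Ha]]]; first by exists y; split; [left|].
  by exists x; split; [right|].
case=> x [[<-|Hx] Ha]; first by rewrite Ha.
by apply/orP; right; apply/IH; exists x.
Qed.

Lemma allIn (T : Type) (a : pred T) (s : seq T) : all a s <-> forall x, List.In x s -> a x.
Proof.
elim: s => [|y s IH] /=; first by split.
split.
  by case/andP=> Hy /IH H x [<-|Hx] //; apply: H.
by move=> H; rewrite H /=; [apply/IH => x Hx; apply: H; right | left].
Qed.

Definition LMv TB (GL : seq game) q (ms : seq bool) :=
  has (fun gl => has (fun m => outcome TB gl q m) ms) GL.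
Definition RMv TB (GR : seq game) q (ms : seq bool) :=
  all (fun gr => all (fun m => outcome TB gr q m) ms) GR.
Definition resv TB GL GR p (lm : bool) l r :=
  if lm then
    (if r < l then LMv TB GL (p - l) [:: true; false]
     else if l == r then LMv TB GL (p - l) [:: false]
     else RMv TB GR (p + r) [:: true])
  else
    (if l < r then RMv TB GR (p + r) [:: false; true]
     else if l == r then RMv TB GR (p + r) [:: true]
     else LMv TB GL (p - l) [:: false]).

Lemma outcomeE TB GL GR p lm : outcome TB (Game GL GR) p lm =
  has (fun l => all (fun r => resv TB GL GR p lm l r) (iota 0 (TB - p).+1)) (iota 0 p.+1).
Proof. reflexivity. Qed.

Lemma gaddE G H : gadd G H =
  Game (map (gadd^~ H) (leftOpts G) ++ map (gadd G) (leftOpts H))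
       (map (gadd^~ H) (rightOpts G) ++ map (gadd G) (rightOpts H)).
Proof. by case: G => GL GR; case: H => HL HR. Qed.

Set Implicit Arguments.

Definition le_st (p : nat) (m : bool) (q : nat) (n : bool) := (2 * p + m <= 2 * q + n)%N.
Definition sq (p : nat) (m : bool) (q : nat) (n : bool) :=
  ((m == n) && (p <= q)) || (m && ~~ n && (p < q)).

Lemma LM1 TB GL q b : LMv TB GL q [:: b] = has (fun x => outcome TB x q b) GL.
Proof. by apply: eq_has => x /=; rewrite orbF. Qed.
Lemma LM2 TB GL q : LMv TB GL q [:: true; false] =
  has (fun x => outcome TB x q true) GL || has (fun x => outcome TB x q false) GL.
Proof. by rewrite -has_predU; apply: eq_has => x /=; rewrite orbF. Qed.
Lemma RM1 TB GR q b : RMv TB GR q [:: b] = all (fun x => outcome TB x q b) GR.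
Proof. by apply: eq_all => x /=; rewrite andbT. Qed.
Lemma RM2 TB GR q : RMv TB GR q [:: false; true] =
  all (fun x => outcome TB x q false) GR && all (fun x => outcome TB x q true) GR.
Proof. by rewrite -all_predI; apply: eq_all => x /=; rewrite andbT. Qed.

Lemma mimic TB XL XR YL YR p m q n :
  le_st p m q n -> q <= TB -> outcome TB (Game XL XR) p m ->
  (forall a b a' b', sq a b a' b' -> a' <= TB ->
     has (fun x => outcome TB x a b) XL -> has (fun y => outcome TB y a' b') YL) ->
  (forall a b a' b', sq a b a' b' -> a' <= TB -> le_st q n a' b' ->
     all (fun x => outcome TB x a b) XR -> all (fun y => outcome TB y a' b') YR) ->
  (~~ m -> n -> forall a', p <= a' -> a' <= TB -> has (fun y => outcome TB y a' false) YL) ->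
  outcome TB (Game YL YR) q n.
Proof.
rewrite /le_st => Hle HqTB; rewrite outcomeE => /hasP [l]; rewrite mem_iota => /andP [_ Hl] /allP Hall HL HR HP.

have Hres r : r <= TB - p -> resv TB XL XR p m l r.
  by move=> Hr; apply: Hall; rewrite mem_iota; lia.
clear Hall.
case: m n Hle Hres HP HR => [] [] Hle Hres HP HR; simpl in Hle.
-
  apply/hasP; exists l; first by rewrite mem_iota; lia.
  apply/allP => r; rewrite mem_iota => /andP [_ Hr]; change (resv TB YL YR q true l r).
  have := Hres r ltac:(lia); rewrite /resv; case: (ltngtP l r) => Hlr.
  + rewrite !RM1 => H; apply: HR H; rewrite /sq /le_st /=; lia.
  + rewrite !LM2 => /orP [H|H]; apply/orP; [left|right]; apply: HL H; rewrite /sq /=; lia.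
  + rewrite !LM1 => H; apply: HL H; rewrite /sq /=; lia.
-
  apply/hasP; exists l; first by rewrite mem_iota; lia.
  apply/allP => r; rewrite mem_iota => /andP [_ Hr]; change (resv TB YL YR q false l r).
  move: (Hres r ltac:(lia)) (Hres r.+1 ltac:(lia)); rewrite /resv; case: (ltngtP l r) => Hlr.
  + rewrite RM2 !RM1 => H _; apply/andP; split; apply: HR H; rewrite /sq /le_st /=; lia.
  + rewrite !LM2 !LM1 => /orP [H|H] _; apply: HL H; rewrite /sq /=; lia.
  + subst r; rewrite ltnNge leqnSn /= eqn_leq ltnn andbF !RM1 => _ H; apply: HR H; rewrite /sq /le_st /=; lia.
-
  case: l Hl Hres => [|l] Hl Hres.
  + apply/hasP; exists 0; first by rewrite mem_iota.
    apply/allP => r; rewrite mem_iota => /andP [_ Hr]; change (resv TB YL YR q true 0 r).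
    have := Hres r ltac:(lia); rewrite /resv; case: (ltngtP 0 r) => Hlr //.
    * rewrite RM2 RM1 => /andP [_ H]; apply: HR H; rewrite /sq /le_st /=; lia.
    * subst r; rewrite LM1 subn0 => _; apply: HP => //; lia.
  + apply/hasP; exists l; first by rewrite mem_iota; lia.
    apply/allP => r; rewrite mem_iota => /andP [_ Hr]; change (resv TB YL YR q true l r).
    have := Hres r ltac:(lia); rewrite /resv.
    case: (ltngtP l r) => Hlr1; case: (ltngtP l.+1 r) => Hlr2; try lia.
    * rewrite RM2 RM1 => /andP [_ H]; apply: HR H; rewrite /sq /le_st /=; lia.
    * subst r; rewrite !RM1 => H; apply: HR H; rewrite /sq /le_st /=; lia.
    * rewrite LM2 LM1 => H; apply/orP; right; apply: HL H; rewrite /sq /=; lia.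
    * subst r; rewrite !LM1 => H; apply: HL H; rewrite /sq /=; lia.
-
  apply/hasP; exists l; first by rewrite mem_iota; lia.
  apply/allP => r; rewrite mem_iota => /andP [_ Hr]; change (resv TB YL YR q false l r).
  have := Hres r ltac:(lia); rewrite /resv; case: (ltngtP l r) => Hlr.
  + rewrite !RM2 => /andP [H1 H2]; apply/andP; split; [apply: HR H1|apply: HR H2]; rewrite /sq /le_st /=; lia.
  + rewrite !LM1 => H; apply: HL H; rewrite /sq /=; lia.
  + rewrite !RM1 => H; apply: HR H; rewrite /sq /le_st /=; lia.
Qed.

Set Implicit Arguments.

Inductive sim : game -> game -> Prop :=
| SimI GL GR HL HR :
    (forall x, List.In x GL -> exists y, List.In y HL /\ sim x y) ->
    (forall y, List.In y HR -> exists x, List.In x GR /\ sim x y) ->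
    sim (Game GL GR) (Game HL HR).

Lemma sq_le p m q n : sq p m q n -> le_st p m q n.
Proof. by rewrite /sq /le_st; case: m; case: n => /=; lia. Qed.

Lemma sq_refl p m : sq p m p m.
Proof. by rewrite /sq eqxx leqnn. Qed.

Lemma le_st_trans p m q n a b : le_st p m q n -> le_st q n a b -> le_st p m a b.
Proof. rewrite /le_st; lia. Qed.

Lemma sq_trans p m q n a b : sq p m q n -> sq q n a b -> sq p m a b.
Proof. by rewrite /sq; case: m; case: n; case: b => /=; lia. Qed.

Lemma sim_out TB G H : sim G H -> forall p m q n, sq p m q n -> q <= TB ->
  outcome TB G p m -> outcome TB H q n.
Proof.
elim/game_ind3: G H => GL GR IHL IHR H Hs.
inversion Hs as [GL0 GR0 HL HR SL SR E1 E2]; subst; move=> p m q n Hsq HqTB Ho.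
apply: (mimic (sq_le Hsq) HqTB Ho).
- move=> a b a' b' Hsq' Ha' /hasIn [x [Hx Hox]].
  case: (SL x Hx) => y [Hy Sxy]; apply/hasIn; exists y; split => //.
  exact: (IHL x Hx y Sxy a b a' b').
- move=> a b a' b' Hsq' Ha' _ /allIn Hall; apply/allIn => y Hy.
  case: (SR y Hy) => x [Hx Sxy].
  exact: (IHR x Hx y Sxy a b a' b' Hsq' Ha' (Hall x Hx)).
- by move: Hsq; rewrite /sq => + Hm Hn; rewrite (negbTE Hm) Hn.
Qed.

Lemma sim_refl G : sim G G.
Proof.
elim/game_ind3: G => GL GR IHL IHR; constructor.
- by move=> x Hx; exists x; split => //; apply: IHL.
- by move=> x Hx; exists x; split => //; apply: IHR.
Qed.

Lemma sim_trans A B C : sim A B -> sim B C -> sim A C.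
Proof.
elim/game_ind3: A B C => AL AR IHL IHR B C S1 S2.
inversion S1 as [AL0 AR0 BL BR SL1 SR1 E1 E2]; subst.
inversion S2 as [BL0 BR0 CL CR SL2 SR2 E1 E2]; subst.
constructor.
- move=> x Hx; case: (SL1 x Hx) => y [Hy Sxy]; case: (SL2 y Hy) => z [Hz Syz].
  by exists z; split => //; apply: IHL Sxy Syz.
- move=> z Hz; case: (SR2 z Hz) => y [Hy Syz]; case: (SR1 y Hy) => x [Hx Sxy].
  by exists x; split => //; apply: IHR Sxy Syz.
Qed.

Lemma In_app_map (f g : game -> game) (l1 l2 : seq game) y :
  List.In y (map f l1 ++ map g l2) <->
  (exists x, List.In x l1 /\ y = f x) \/ (exists x, List.In x l2 /\ y = g x).
Proof.
rewrite List.in_app_iff !List.in_map_iff; split.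
- by case=> [[x [<- Hx]]|[x [<- Hx]]]; [left|right]; exists x.
- by case=> [[x [Hx ->]]|[x [Hx ->]]]; [left|right]; exists x.
Qed.

Lemma In_map_f (f : game -> game) (l : seq game) x : List.In x l -> List.In (f x) (map f l).
Proof. exact: List.in_map. Qed.

Lemma In_app_l (l1 l2 : seq game) x : List.In x l1 -> List.In x (l1 ++ l2).
Proof. by move=> H; apply/List.in_app_iff; left. Qed.
Lemma In_app_r (l1 l2 : seq game) x : List.In x l2 -> List.In x (l1 ++ l2).
Proof. by move=> H; apply/List.in_app_iff; right. Qed.

Lemma sim_add A A' B B' : sim A A' -> sim B B' -> sim (gadd A B) (gadd A' B').
Proof.
elim/game_ind3: A A' B B' => AL AR IHAL IHAR A' B B' SA.
elim/game_ind3: B B' => BL BR IHBL IHBR B' SB.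
inversion SA as [AL0 AR0 AL' AR' SAL SAR E1 E2]; subst.
inversion SB as [BL0 BR0 BL' BR' SBL SBR E1 E2]; subst.
rewrite !gaddE /=; constructor.
- move=> x /In_app_map [[a [Ha ->]]|[b [Hb ->]]].
  + case: (SAL a Ha) => a' [Ha' S]; exists (gadd a' (Game BL' BR')); split.
      by apply: In_app_l; apply: In_map_f.
    by apply: IHAL => //; constructor.
  + case: (SBL b Hb) => b' [Hb' S]; exists (gadd (Game AL' AR') b'); split.
      by apply: In_app_r; apply: In_map_f.
    by apply: IHBL => //; constructor.
- move=> y /In_app_map [[a' [Ha' ->]]|[b' [Hb' ->]]].
  + case: (SAR a' Ha') => a [Ha S]; exists (gadd a (Game BL BR)); split.
      by apply: In_app_l; apply: In_map_f.
    by apply: IHAR => //; constructor.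
  + case: (SBR b' Hb') => b [Hb S]; exists (gadd (Game AL AR) b); split.
      by apply: In_app_r; apply: In_map_f.
    by apply: IHBR => //; constructor.
Qed.

Lemma sim_comm A B : sim (gadd A B) (gadd B A).
Proof.
elim/game_ind3: A B => AL AR IHAL IHAR B.
elim/game_ind3: B => BL BR IHBL IHBR.
rewrite !gaddE /=; constructor.
- move=> x /In_app_map [[a [Ha ->]]|[b [Hb ->]]].
  + exists (gadd (Game BL BR) a); split; first by apply: In_app_r; apply: In_map_f.
    exact: IHAL.
  + exists (gadd b (Game AL AR)); split; first by apply: In_app_l; apply: In_map_f.
    exact: IHBL.
- move=> y /In_app_map [[b [Hb ->]]|[a [Ha ->]]].
  + exists (gadd (Game AL AR) b); split; first by apply: In_app_r; apply: In_map_f.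
    exact: IHBR.
  + exists (gadd a (Game BL BR)); split; first by apply: In_app_l; apply: In_map_f.
    exact: IHAR.
Qed.

Lemma gaddE' GL GR HL HR : gadd (Game GL GR) (Game HL HR) =
  Game (map (gadd^~ (Game HL HR)) GL ++ map (gadd (Game GL GR)) HL)
       (map (gadd^~ (Game HL HR)) GR ++ map (gadd (Game GL GR)) HR).
Proof. by rewrite gaddE. Qed.

Lemma sim_assoc A B C : sim (gadd (gadd A B) C) (gadd A (gadd B C)) /\
                        sim (gadd A (gadd B C)) (gadd (gadd A B) C).
Proof.
elim/game_ind3: A B C => AL AR IHAL IHAR B C.
elim/game_ind3: B C => BL BR IHBL IHBR C.
elim/game_ind3: C => CL CR IHCL IHCR.
set A := Game AL AR; set B := Game BL BR; set C := Game CL CR.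
have EAB : gadd A B = Game (map (gadd^~ B) AL ++ map (gadd A) BL) (map (gadd^~ B) AR ++ map (gadd A) BR) by rewrite gaddE'.
have EBC : gadd B C = Game (map (gadd^~ C) BL ++ map (gadd B) CL) (map (gadd^~ C) BR ++ map (gadd B) CR) by rewrite gaddE'.
have E1 : gadd (gadd A B) C = Game (map (gadd^~ C) (map (gadd^~ B) AL ++ map (gadd A) BL) ++ map (gadd (gadd A B)) CL)
   (map (gadd^~ C) (map (gadd^~ B) AR ++ map (gadd A) BR) ++ map (gadd (gadd A B)) CR).
  by rewrite {1}EAB gaddE'.
have E2 : gadd A (gadd B C) = Game (map (gadd^~ (gadd B C)) AL ++ map (gadd A) (map (gadd^~ C) BL ++ map (gadd B) CL))
   (map (gadd^~ (gadd B C)) AR ++ map (gadd A) (map (gadd^~ C) BR ++ map (gadd B) CR)).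
  by rewrite {2}EBC gaddE'.
rewrite E1 E2; split; constructor.
- move=> x /List.in_app_iff [/List.in_map_iff [y [<- /In_app_map [[a [Ha ->]]|[b [Hb ->]]]]]|/List.in_map_iff [c [<- Hc]]].
  + exists (gadd a (gadd B C)); split; first by apply: In_app_l; apply: In_map_f.
    by case: (IHAL a Ha B C).
  + exists (gadd A (gadd b C)); split; first by apply: In_app_r; apply: In_map_f; apply: In_app_l; apply: In_map_f.
    by case: (IHBL b Hb C).
  + exists (gadd A (gadd B c)); split; first by apply: In_app_r; apply: In_map_f; apply: In_app_r; apply: In_map_f.
    by case: (IHCL c Hc).
- move=> x /List.in_app_iff [/List.in_map_iff [a [<- Ha]]|/List.in_map_iff [y [<- /In_app_map [[b [Hb ->]]|[c [Hc ->]]]]]].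
  + exists (gadd (gadd a B) C); split; first by apply: In_app_l; apply: In_map_f; apply: In_app_l; apply: In_map_f.
    by case: (IHAR a Ha B C).
  + exists (gadd (gadd A b) C); split; first by apply: In_app_l; apply: In_map_f; apply: In_app_r; apply: In_map_f.
    by case: (IHBR b Hb C).
  + exists (gadd (gadd A B) c); split; first by apply: In_app_r; apply: In_map_f.
    by case: (IHCR c Hc).
- move=> x /List.in_app_iff [/List.in_map_iff [a [<- Ha]]|/List.in_map_iff [y [<- /In_app_map [[b [Hb ->]]|[c [Hc ->]]]]]].
  + exists (gadd (gadd a B) C); split; first by apply: In_app_l; apply: In_map_f; apply: In_app_l; apply: In_map_f.
    by case: (IHAL a Ha B C).
  + exists (gadd (gadd A b) C); split; first by apply: In_app_l; apply: In_map_f; apply: In_app_r; apply: In_map_f.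
    by case: (IHBL b Hb C).
  + exists (gadd (gadd A B) c); split; first by apply: In_app_r; apply: In_map_f.
    by case: (IHCL c Hc).
- move=> x /List.in_app_iff [/List.in_map_iff [y [<- /In_app_map [[a [Ha ->]]|[b [Hb ->]]]]]|/List.in_map_iff [c [<- Hc]]].
  + exists (gadd a (gadd B C)); split; first by apply: In_app_l; apply: In_map_f.
    by case: (IHAR a Ha B C).
  + exists (gadd A (gadd b C)); split; first by apply: In_app_r; apply: In_map_f; apply: In_app_l; apply: In_map_f.
    by case: (IHBR b Hb C).
  + exists (gadd A (gadd B c)); split; first by apply: In_app_r; apply: In_map_f; apply: In_app_r; apply: In_map_f.
    by case: (IHCR c Hc).
Qed.

Lemma g0addE A : gadd g0 A = Game (map (gadd g0) (leftOpts A)) (map (gadd g0) (rightOpts A)).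
Proof. by rewrite gaddE. Qed.

Lemma sim_zero A : sim (gadd g0 A) A /\ sim A (gadd g0 A).
Proof.
elim/game_ind3: A => AL AR IHL IHR; rewrite g0addE /=; split; constructor.
- by move=> x /List.in_map_iff [a [<- Ha]]; exists a; split => //; case: (IHL a Ha).
- by move=> y Hy; exists (gadd g0 y); split; [apply: In_map_f|case: (IHR y Hy)].
- by move=> x Hx; exists (gadd g0 x); split; [apply: In_map_f|case: (IHL x Hx)].
- by move=> y /List.in_map_iff [a [<- Ha]]; exists a; split => //; case: (IHR a Ha).
Qed.

Unset Implicit Arguments.


Lemma sim_o TB G H p m : p <= TB -> sim G H -> outcome TB G p m -> outcome TB H p m.
Proof. by move=> Hp S; apply: (sim_out S (sq_refl p m) Hp). Qed.
Arguments sim_o {TB G H p m}.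

Lemma sim_gge TB A B : sim B A -> gge TB A B.
Proof. by move=> S X p m Hp; apply: (sim_o Hp); apply: sim_add S (sim_refl X). Qed.

Lemma gge_refl TB A : gge TB A A.
Proof. by move=> X p m. Qed.

Lemma gge_trans TB A B C : gge TB A B -> gge TB B C -> gge TB A C.
Proof. by move=> H1 H2 X p m Hp H; apply: H1 => //; apply: H2. Qed.

Lemma gge_addr TB A A' B : gge TB A A' -> gge TB (gadd A B) (gadd A' B).
Proof.
move=> H X p m Hp Ho.
apply: (sim_o Hp (proj2 (sim_assoc A B X))); apply: H => //.
by apply: (sim_o Hp (proj1 (sim_assoc A' B X))).
Qed.

Lemma gge_comm TB A B : gge TB (gadd A B) (gadd B A).
Proof. by apply: sim_gge; apply: sim_comm. Qed.

Lemma gge_addl TB A B B' : gge TB B B' -> gge TB (gadd A B) (gadd A B').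
Proof.
move=> H; apply: (gge_trans _ _ _ _ (gge_comm _ _ _)).
apply: (gge_trans _ _ _ _ (gge_addr _ _ _ A H)); exact: gge_comm.
Qed.

Lemma geq_refl TB A : geq TB A A.
Proof. by split; apply: gge_refl. Qed.
Lemma geq_sym TB A B : geq TB A B -> geq TB B A.
Proof. by case. Qed.
Lemma geq_trans TB A B C : geq TB A B -> geq TB B C -> geq TB A C.
Proof. by case=> H1 H2 [H3 H4]; split; apply: gge_trans; eauto. Qed.
Lemma geq_add TB A A' B B' : geq TB A A' -> geq TB B B' -> geq TB (gadd A B) (gadd A' B').
Proof.
case=> H1 H2 [H3 H4]; split.
- apply: (gge_trans _ _ _ _ (gge_addr _ _ _ B H1) (gge_addl _ A' _ _ H3)).
- apply: (gge_trans _ _ _ _ (gge_addr _ _ _ B' H2) (gge_addl _ A _ _ H4)).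
Qed.
Lemma geq_sim TB A B : sim A B -> sim B A -> geq TB A B.
Proof. by move=> S1 S2; split; apply: sim_gge. Qed.
Lemma geq_comm TB A B : geq TB (gadd A B) (gadd B A).
Proof. by apply: geq_sim; apply: sim_comm. Qed.
Lemma geq_assoc TB A B C : geq TB (gadd (gadd A B) C) (gadd A (gadd B C)).
Proof. by case: (sim_assoc A B C) => S1 S2; apply: geq_sim. Qed.
Lemma geq_zero TB A : geq TB (gadd g0 A) A.
Proof. by case: (sim_zero A) => S1 S2; apply: geq_sim. Qed.
Lemma geq_zero_r TB A : geq TB (gadd A g0) A.
Proof. apply: geq_trans (geq_comm _ _ _) (geq_zero _ _). Qed.

Lemma sim_addg0 A : sim (gadd A g0) A /\ sim A (gadd A g0).
Proof.
case: (sim_zero A) => S1 S2; split.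
- exact: sim_trans (sim_comm _ _) S1.
- exact: sim_trans S2 (sim_comm _ _).
Qed.

Lemma geq_out TB A B p m : p <= TB -> geq TB A B -> outcome TB A p m = outcome TB B p m.
Proof.
move=> Hp [H1 H2]; case: (sim_addg0 A) => SA1 SA2; case: (sim_addg0 B) => SB1 SB2.
apply/idP/idP => H.
- apply: (sim_o Hp SB1); apply: H2 => //; exact: (sim_o Hp SA2 H).
- apply: (sim_o Hp SA1); apply: H1 => //; exact: (sim_o Hp SB2 H).
Qed.

Lemma gge_geq TB A A' B B' : geq TB A A' -> geq TB B B' -> gge TB A B -> gge TB A' B'.
Proof.
case=> H1 H2 [H3 H4] H; apply: gge_trans H2 _; apply: gge_trans H _; exact H3.
Qed.

Lemma ggt_geq TB A A' B B' : geq TB A A' -> geq TB B B' -> ggt TB A B -> ggt TB A' B'.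
Proof.
move=> E1 E2 [H1 H2]; split; first exact: (gge_geq _ _ _ _ _ E1 E2 H1).
by move=> H; apply: H2; apply: (gge_geq _ _ _ _ _ (geq_sym _ _ _ E2) (geq_sym _ _ _ E1) H).
Qed.

Lemma isNumber_geq TB A B : isNumber TB B -> geq TB A B -> isNumber TB A.
Proof.
case=> B' H E HL HR HL' HR' E'.
exact: (isNumber_intro (geq_trans _ _ _ _ E' E) HL HR HL' HR').
Qed.

Set Implicit Arguments.

Definition hb k := gconj (halfpow k).

Lemma hp_left k : leftOpts (halfpow k) = [:: g0]. Proof. by case: k. Qed.
Lemma hp_right0 : rightOpts (halfpow 0) = [::]. Proof. by []. Qed.
Lemma hp_rightS k : rightOpts (halfpow k.+1) = [:: halfpow k]. Proof. by []. Qed.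
Lemma hb_left0 : leftOpts (hb 0) = [::]. Proof. by []. Qed.
Lemma hb_leftS k : leftOpts (hb k.+1) = [:: hb k]. Proof. by []. Qed.
Lemma hb_right k : rightOpts (hb k) = [:: g0]. Proof. by case: k. Qed.

Lemma In1 (x y : game) : List.In x [:: y] -> x = y.
Proof. by case=> [->|[]]. Qed.

Lemma H2 TB k : forall X p m q n, le_st p m q n -> q <= TB -> outcome TB X p m ->
  outcome TB (gadd (halfpow k) X) q n.
Proof.
elim: k => [|k IHk] X; elim/game_ind3: X => XL XR IHL IHR p m q n Hle HqTB Ho;
  rewrite gaddE; apply: (mimic Hle HqTB Ho).
- move=> a b a' b' Hsq Ha' /hasIn [x [Hx Hox]]; apply/hasIn.
  exists (gadd (halfpow 0) x); split; first by apply: In_app_r; apply: In_map_f.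
  exact: IHL x Hx a b a' b' (sq_le Hsq) Ha' Hox.
- move=> a b a' b' Hsq Ha' Hle' /allIn Hall; apply/allIn => y /In_app_map [[z [Hz ->]]|[x [Hx ->]]].
  + by move: Hz; rewrite hp_right0.
  + exact: IHR x Hx a b a' b' (sq_le Hsq) Ha' (Hall x Hx).
- move=> Hm Hn a' Hpa' Ha'; apply/hasIn; exists (gadd g0 (Game XL XR)); split.
    by apply: In_app_l; rewrite hp_left; left.
  apply: (sim_o Ha' (proj2 (sim_zero _))).
  apply: (sim_out (sim_refl _) _ Ha' Ho).
  by move: Hm; rewrite /sq; case: m {Ho Hle} => //= _; rewrite Hpa'.
- move=> a b a' b' Hsq Ha' /hasIn [x [Hx Hox]]; apply/hasIn.
  exists (gadd (halfpow k.+1) x); split; first by apply: In_app_r; apply: In_map_f.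
  exact: IHL x Hx a b a' b' (sq_le Hsq) Ha' Hox.
- move=> a b a' b' Hsq Ha' Hle' /allIn Hall; apply/allIn => y /In_app_map [[z [Hz ->]]|[x [Hx ->]]].
  + move: Hz; rewrite hp_rightS => /In1 ->.
    exact: IHk (Game XL XR) p m a' b' (le_st_trans Hle Hle') Ha' Ho.
  + exact: IHR x Hx a b a' b' (sq_le Hsq) Ha' (Hall x Hx).
- move=> Hm Hn a' Hpa' Ha'; apply/hasIn; exists (gadd g0 (Game XL XR)); split.
    by apply: In_app_l; rewrite hp_left; left.
  apply: (sim_o Ha' (proj2 (sim_zero _))).
  apply: (sim_out (sim_refl _) _ Ha' Ho).
  by move: Hm; rewrite /sq; case: m {Ho Hle} => //= _; rewrite Hpa'.
Qed.

Definition Y j k D := gadd (halfpow j) (gadd (hb k) D).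

Lemma gameE G : G = Game (leftOpts G) (rightOpts G).
Proof. by case: G. Qed.

Lemma sq_nFT p q : ~~ sq p false q true.
Proof. by []. Qed.

Lemma Y_mimic TB j k :
  (forall j', j = j'.+1 -> forall D p m a b, le_st p m a b -> a <= TB ->
     outcome TB D p m -> outcome TB (Y j' k D) a b) ->
  forall D p m q n, le_st p m q n -> q <= TB -> outcome TB D p m ->
  (~~ m -> n -> forall a', p <= a' -> a' <= TB ->
     has (fun y => outcome TB y a' false) (leftOpts (Y j k D))) ->
  outcome TB (Y j k D) q n.
Proof.
move=> R1 D; elim/game_ind3: D => DL DR IHL IHR p m q n Hle HqTB Ho HP.
rewrite (gameE (Y j k _)); apply: (mimic Hle HqTB Ho) => //.
- move=> a b a' b' Hsq Ha' /hasIn [x [Hx Hox]]; apply/hasIn.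
  exists (Y j k x); split.
    rewrite /Y [X in List.In _ (leftOpts X)]gaddE; apply: In_app_r; apply: In_map_f.
    by rewrite [X in List.In _ (leftOpts X)]gaddE; apply: In_app_r; apply: In_map_f.
  apply: (IHL x Hx a b a' b' (sq_le Hsq) Ha' Hox).
  by move=> Hb Hb'; move: Hsq; rewrite (negbTE Hb) Hb'.
- move=> a b a' b' Hsq Ha' Hle' /allIn Hall; apply/allIn => y.
  rewrite /Y [gadd (halfpow j) _]gaddE => /In_app_map [[z [Hz ->]]|[w [Hw ->]]].
  + clear IHL IHR HP; case: j R1 Hz => [|j'] R1; first by rewrite hp_right0.
    rewrite hp_rightS => /In1 ->.
    exact: R1 j' erefl (Game DL DR) p m a' b' (le_st_trans Hle Hle') Ha' Ho.
  + move: Hw; rewrite gaddE => /In_app_map [[u [Hu ->]]|[x [Hx ->]]].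
    * move: Hu; rewrite hb_right => /In1 ->.
      apply: (sim_o Ha' (sim_add (sim_refl _) (proj2 (sim_zero _)))).
      exact: H2 (le_st_trans Hle Hle') Ha' Ho.
    * apply: (IHR x Hx a b a' b' (sq_le Hsq) Ha' (Hall x Hx)).
      by move=> Hb Hb'; move: Hsq; rewrite (negbTE Hb) Hb'.
Qed.

Lemma Y_left_hb j k D : List.In (Y j k D) (leftOpts (Y j k.+1 D)).
Proof.
rewrite /Y [X in List.In _ (leftOpts X)]gaddE; apply: In_app_r; apply: In_map_f.
by rewrite [X in List.In _ (leftOpts X)]gaddE hb_leftS; apply: In_app_l; left.
Qed.

Definition Sprop TB j k := forall D p m a b, le_st p m a b -> a <= TB ->
  outcome TB D p m -> outcome TB (Y j k D) a b.
Definition Eprop TB k := forall D p m a b, sq p m a b -> a <= TB ->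
  outcome TB D p m -> outcome TB (Y k k D) a b.

Lemma SE TB k : (forall j, j < k -> Sprop TB j k) /\ Eprop TB k.
Proof.
elim: k => [|k [IHS IHE]].
- split => // D p m a b Hsq Ha Ho.
  apply: (@Y_mimic TB 0 0 _ D p m a b (sq_le Hsq) Ha Ho) => //.
  by move=> Hm Hb; move: Hsq; rewrite (negbTE Hm) Hb.
- have HS : forall j, j < k.+1 -> Sprop TB j k.+1.
    elim=> [|j IHj] Hj D p m a b Hle Ha Ho.
    + apply: (@Y_mimic TB 0 k.+1 _ D p m a b Hle Ha Ho) => // Hm _ a' Hpa' Ha'.
      apply/hasIn; exists (Y 0 k D); split; first exact: Y_left_hb.
      case: m Hm Ho {Hle} => // _ Ho.
      case: k IHS IHE Hj => [|k] IHS IHE Hj.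
      * by apply: (IHE D p false a' false _ Ha' Ho); rewrite /sq /= Hpa'.
      * by apply: (IHS 0 erefl D p false a' false _ Ha' Ho); rewrite /le_st /=; lia.
    + apply: (@Y_mimic TB j.+1 k.+1 _ D p m a b Hle Ha Ho).
      * by move=> j' [<-]; apply: IHj; lia.
      * move=> Hm _ a' Hpa' Ha'.
        apply/hasIn; exists (Y j.+1 k D); split; first exact: Y_left_hb.
        case: m Hm Ho {Hle} => // _ Ho.
        case: (ltngtP j.+1 k) => Hjk.
        - by apply: (IHS j.+1 Hjk D p false a' false _ Ha' Ho); rewrite /le_st /=; lia.
        - lia.
        - by rewrite Hjk; apply: (IHE D p false a' false _ Ha' Ho); rewrite /sq /= Hpa'.
  split => // D p m a b Hsq Ha Ho.
  apply: (@Y_mimic TB k.+1 k.+1 _ D p m a b (sq_le Hsq) Ha Ho).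
  + by move=> j' [<-]; apply: HS.
  + by move=> Hm Hb; move: Hsq; rewrite (negbTE Hm) Hb.
Qed.

Set Implicit Arguments.

Lemma mono TB x a b a' b' : sq a b a' b' -> a' <= TB -> outcome TB x a b -> outcome TB x a' b'.
Proof. by move=> Hs Ha; apply: (sim_out (sim_refl x) Hs Ha). Qed.

Lemma allmono TB s a b a' b' : sq a b a' b' -> a' <= TB ->
  all (fun x => outcome TB x a b) s -> all (fun x => outcome TB x a' b') s.
Proof. by move=> Hs Ha /allIn H; apply/allIn => x Hx; apply: mono Hs Ha (H x Hx). Qed.

Lemma hasmono TB s a b a' b' : sq a b a' b' -> a' <= TB ->
  has (fun x => outcome TB x a b) s -> has (fun x => outcome TB x a' b') s.
Proof. by move=> Hs Ha /hasIn [x [Hx H]]; apply/hasIn; exists x; split => //; apply: mono Hs Ha H. Qed.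

Lemma det TB GL GR P lm : P <= TB ->
  (forall r, r <= TB - P -> exists l, l <= P /\ resv TB GL GR P lm l r) ->
  exists l, l <= P /\ forall r, r <= TB - P -> resv TB GL GR P lm l r.
Proof.
move=> HP RF; set Q := TB - P.
case: lm RF => RF.
-
  pose Ap := fun r => RMv TB GR (P + r) [:: true].
  have Amono r r' : r <= r' -> r' <= Q -> Ap r -> Ap r'.
    by move=> H1 H2; rewrite /Ap !RM1; apply: allmono; rewrite /sq /=; lia.
  have Dmono l l' : l <= l' -> l' <= P -> LMv TB GL (P - l') [:: false] -> LMv TB GL (P - l) [:: false].
    by move=> H1 H2; rewrite !LM1; apply: hasmono; rewrite /sq /=; lia.
  have CD l l' : l < l' -> l' <= P -> LMv TB GL (P - l') [:: true; false] -> LMv TB GL (P - l) [:: false].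
    move=> H1 H2; rewrite LM2 LM1 => /orP [H|H]; apply: hasmono H; rewrite /sq /=; lia.
  have DC l : LMv TB GL (P - l) [:: false] -> LMv TB GL (P - l) [:: true; false].
    by rewrite LM2 LM1 => ->; rewrite orbT.
  have HnA r : r <= Q -> ~~ Ap r -> r <= P /\ LMv TB GL (P - r) [:: false].
    move=> Hr HnA; case: (RF r Hr) => l [Hl]; rewrite /resv.
    case: (ltngtP l r) => Hlr.
    + by move=> H; move: HnA; rewrite /Ap H.
    + move=> H; split; first lia.
      by apply: CD H.
    + by move=> H; subst l.
  case: (boolP (has (fun r => (r <= Q) && Ap r) (iota 0 Q.+1))) => Hex.
  + have Hex' : exists r, (fun r => (r <= Q) && Ap r) r.
      by case/hasP: Hex => r _ H; exists r.
    case: (ex_minnP Hex') => r0 /andP [Hr0Q HAr0] Hmin.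
    case: r0 Hr0Q HAr0 Hmin => [|r0] Hr0Q HAr0 Hmin.
    * exists 0; split => // r Hr; rewrite /resv.
      case: (ltngtP 0 r) => H0r //.
      - by apply: Amono HAr0.
      - subst r; case: (RF 0 Hr) => l [Hl]; rewrite /resv.
        case: (ltngtP l 0) => //= Hl0.
        + by move=> H; apply: CD H.
        + by subst l.
    * have HnA0 : ~~ Ap r0.
        apply/negP => H; have := Hmin r0; rewrite H andbT; lia.
      case: (HnA r0 ltac:(lia) HnA0) => Hr0P HD.
      exists r0; split => // r Hr; rewrite /resv.
      case: (ltngtP r0 r) => Hr0r.
      - by apply: Amono HAr0.
      - by apply: DC; apply: Dmono HD.
      - by subst r.
  + have HnAll r : r <= Q -> ~~ Ap r.
      move=> Hr; apply/negP => H; move/hasP: Hex; apply; exists r; first by rewrite mem_iota; lia.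
      by rewrite Hr H.
    case: (HnA Q (leqnn Q) (HnAll Q (leqnn Q))) => HQP HD.
    exists Q; split => // r Hr; rewrite /resv.
    case: (ltngtP Q r) => HQr.
    + lia.
    + by apply: DC.
    + by subst r.
-
  pose Bp := fun r => RMv TB GR (P + r) [:: true].
  have AB r : RMv TB GR (P + r) [:: false; true] -> Bp r.
    by rewrite /Bp RM2 RM1 => /andP [].
  have BA r r' : r < r' -> r' <= Q -> Bp r -> RMv TB GR (P + r') [:: false; true].
    move=> H1 H2; rewrite /Bp RM2 RM1 => H; apply/andP; split; apply: allmono H; rewrite /sq /=; lia.
  have Bmono r r' : r <= r' -> r' <= Q -> Bp r -> Bp r'.
    by move=> H1 H2; rewrite /Bp !RM1; apply: allmono; rewrite /sq /=; lia.
  have Cmono l l' : l <= l' -> l' <= P -> LMv TB GL (P - l') [:: false] -> LMv TB GL (P - l) [:: false].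
    by move=> H1 H2; rewrite !LM1; apply: hasmono; rewrite /sq /=; lia.
  case: (boolP (has (fun r => (r <= Q) && Bp r) (iota 0 Q.+1))) => Hex.
  + have Hex' : exists r, (fun r => (r <= Q) && Bp r) r.
      by case/hasP: Hex => r _ H; exists r.
    case: (ex_minnP Hex') => r0 /andP [Hr0Q HBr0] Hmin.
    have HC : 0 < r0 -> r0 <= P /\ LMv TB GL (P - r0) [:: false].
      move=> Hr0; case: (RF r0.-1 ltac:(lia)) => l [Hl]; rewrite /resv.
      case: (ltngtP l r0.-1) => Hlr.
      + move=> /AB H; have := Hmin r0.-1; rewrite H andbT; lia.
      + move=> H; split; first lia.
        by apply: Cmono H; lia.
      + subst l => H; have := Hmin r0.-1; rewrite /Bp H andbT; lia.
    exists r0; split.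
      by case: r0 {Hr0Q HBr0 Hmin} HC => // r0 HC; case: (HC erefl).
    move=> r Hr; rewrite /resv; case: (ltngtP r0 r) => Hr0r.
    * by apply: BA HBr0.
    * by case: (HC ltac:(lia)).
    * by subst r.
  + have HnAll r : r <= Q -> ~~ Bp r.
      move=> Hr; apply/negP => H; move/hasP: Hex; apply; exists r; first by rewrite mem_iota; lia.
      by rewrite Hr H.
    have HQ : Q < P /\ LMv TB GL (P - Q.+1) [:: false].
      case: (RF Q (leqnn Q)) => l [Hl]; rewrite /resv; case: (ltngtP l Q) => HlQ.
      + by move=> /AB H; move: (HnAll Q (leqnn Q)); rewrite H.
      + move=> H; split; first lia.
        by apply: Cmono H; lia.
      + by subst l => H; move: (HnAll Q (leqnn Q)); rewrite /Bp H.
    case: HQ => HQP HC.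
    exists Q.+1; split => // r Hr; rewrite /resv.
    by case: (ltngtP Q.+1 r) => HQr; try lia.
Qed.

Lemma eq_has_In (T : Type) (a b : pred T) (s : seq T) :
  (forall x, List.In x s -> a x = b x) -> has a s = has b s.
Proof.
elim: s => [|y s IH] //= H; rewrite H; last by left.
by rewrite IH // => x Hx; apply: H; right.
Qed.

Lemma eq_all_In (T : Type) (a b : pred T) (s : seq T) :
  (forall x, List.In x s -> a x = b x) -> all a s = all b s.
Proof.
elim: s => [|y s IH] //= H; rewrite H; last by left.
by rewrite IH // => x Hx; apply: H; right.
Qed.

Lemma LMv_conj TB GR q ms :
  (forall x, List.In x GR -> forall p m, p <= TB ->
     outcome TB (gconj x) p m = ~~ outcome TB x (TB - p) (~~ m)) ->
  q <= TB -> LMv TB (map gconj GR) q ms = ~~ RMv TB GR (TB - q) (map negb ms).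
Proof.
move=> IH Hq; rewrite /LMv /RMv has_map -has_predC; apply: eq_has_In => x Hx /=.
by rewrite -has_predC has_map; apply: eq_has => m /=; rewrite IH.
Qed.

Lemma RMv_conj TB GL q ms :
  (forall x, List.In x GL -> forall p m, p <= TB ->
     outcome TB (gconj x) p m = ~~ outcome TB x (TB - p) (~~ m)) ->
  q <= TB -> RMv TB (map gconj GL) q ms = ~~ LMv TB GL (TB - q) (map negb ms).
Proof.
move=> IH Hq; rewrite /LMv /RMv all_map -all_predC; apply: eq_all_In => x Hx /=.
by rewrite -all_predC all_map; apply: eq_all => m /=; rewrite IH.
Qed.

Lemma conj_out TB G : forall p m, p <= TB ->
  outcome TB (gconj G) p m = ~~ outcome TB G (TB - p) (~~ m).
Proof.
elim/game_ind3: G => GL GR IHL IHR p m Hp.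
change (gconj (Game GL GR)) with (Game (map gconj GR) (map gconj GL)).
have Hres a b : a <= p -> b <= TB - p ->
    resv TB (map gconj GR) (map gconj GL) p m a b = ~~ resv TB GL GR (TB - p) (~~ m) b a.
  move=> Ha Hb; rewrite /resv; case: m => /=.
  - case: (ltngtP b a) => Hba.
    + by rewrite LMv_conj //; [congr (~~ RMv _ _ _ _); lia|lia].
    + by rewrite RMv_conj //; [congr (~~ LMv _ _ _ _); lia|lia].
    + by subst b; rewrite LMv_conj //; [congr (~~ RMv _ _ _ _); lia|lia].
  - case: (ltngtP b a) => Hba.
    + by rewrite LMv_conj //; [congr (~~ RMv _ _ _ _); lia|lia].
    + by rewrite RMv_conj //; [congr (~~ LMv _ _ _ _); lia|lia].
    + by subst b; rewrite RMv_conj //; [congr (~~ LMv _ _ _ _); lia|lia].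
rewrite !outcomeE (subKn Hp); apply/idP/idP.
- case/hasP => a; rewrite mem_iota => /andP [_ Ha] /allP Hall.
  apply/hasP => [[l]]; rewrite mem_iota => /andP [_ Hl] /allP H.
  have Hl' : l \in iota 0 (TB - p).+1 by rewrite mem_iota; lia.
  move: (Hall l Hl'); rewrite Hres; [|lia|lia].
  by move/negP; apply; apply: H; rewrite mem_iota; lia.
- move=> HnR; apply/negPn/negP => HnL.
  have RF : forall r, r <= TB - (TB - p) -> exists l, l <= TB - p /\ resv TB GL GR (TB - p) (~~ m) l r.
    move=> r Hr; have Hr' : r \in iota 0 p.+1 by rewrite mem_iota; lia.
    move/hasPn: HnL => /(_ r Hr').
    case/allPn => l; rewrite mem_iota => /andP [_ Hl]; rewrite Hres; [|lia|lia].
    by rewrite negbK => H; exists l; split => //; lia.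
  have [l [Hl H]] := det (leq_subr p TB) RF.
  move/hasP: HnR; apply; exists l; first by rewrite mem_iota; lia.
  by apply/allP => r; rewrite mem_iota => /andP [_ Hr]; apply: H; lia.
Qed.

Unset Implicit Arguments.

Lemma gconjE L R : gconj (Game L R) = Game (map gconj R) (map gconj L).
Proof. by []. Qed.

Lemma map_ext_In (f g : game -> game) (l : seq game) :
  (forall x, List.In x l -> f x = g x) -> map f l = map g l.
Proof. exact: List.map_ext_in. Qed.

Lemma gconj_add A B : gconj (gadd A B) = gadd (gconj A) (gconj B).
Proof.
elim/game_ind3: A B => AL AR IHAL IHAR B.
elim/game_ind3: B => BL BR IHBL IHBR.
rewrite gaddE' !gconjE gaddE' !map_cat -!map_comp; congr Game; congr cat.
- by apply: map_ext_In => x Hx /=; rewrite IHAR.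
- by apply: map_ext_In => x Hx /=; rewrite IHBR.
- by apply: map_ext_In => x Hx /=; rewrite IHAL.
- by apply: map_ext_In => x Hx /=; rewrite IHBL.
Qed.

Lemma gconjK G : gconj (gconj G) = G.
Proof.
elim/game_ind3: G => GL GR IHL IHR; rewrite !gconjE -!map_comp.
by congr Game; rewrite -[RHS]map_id; apply: map_ext_In => x Hx /=; [rewrite IHL|rewrite IHR].
Qed.

Lemma gconj0 : gconj g0 = g0. Proof. by []. Qed.

Lemma gge_conj TB A B : gge TB A B -> gge TB (gconj B) (gconj A).
Proof.
move=> H X p m Hp.
have E C : outcome TB (gadd (gconj C) X) p m = ~~ outcome TB (gadd C (gconj X)) (TB - p) (~~ m).
  by rewrite -{1}(gconjK X) -gconj_add conj_out.
rewrite !E; apply: contra; apply: H; lia.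
Qed.

Lemma sim_h_succ k : sim (halfpow k.+1) (halfpow k).
Proof.
elim: k => [|k IH]; constructor.
- by move=> x [<-|[]]; exists g0; split; [left|apply: sim_refl].
- by move=> y [].
- by move=> x [<-|[]]; exists g0; split; [left|apply: sim_refl].
- by move=> y [<-|[]]; exists (halfpow k.+1); split; [left|].
Qed.

Lemma K1 TB k : gge TB (halfpow k) g0.
Proof.
move=> X p m Hp Ho.
have Ho' := sim_o Hp (proj1 (sim_zero X)) Ho.
have Hle : le_st p m p m by rewrite /le_st.
exact: (H2 k Hle Hp Ho').
Qed.

Lemma K2 TB k : gge TB (halfpow k) (halfpow k.+1).
Proof. by apply: sim_gge; apply: sim_h_succ. Qed.

Lemma K3a TB k : gge TB (gadd (halfpow k) (hb k)) g0.
Proof.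
move=> X p m Hp Ho.
apply: (sim_o Hp (proj2 (sim_assoc _ _ _))).
case: (SE TB k) => _ HE; apply: (HE X p m p m (sq_refl p m) Hp).
exact: (sim_o Hp (proj1 (sim_zero X)) Ho).
Qed.

Lemma K3 TB k : geq TB (gadd (halfpow k) (hb k)) g0.
Proof.
split; first exact: K3a.
have := gge_conj _ _ _ (K3a TB k); rewrite gconj_add gconj0 /hb gconjK => H.
exact: (gge_trans _ _ _ _ H (gge_comm _ _ _)).
Qed.

Lemma geq_lc TB A B C : geq TB (gadd A (gadd B C)) (gadd B (gadd A C)).
Proof.
eapply geq_trans; first exact: geq_sym _ _ _ (geq_assoc _ _ _ _).
eapply geq_trans; first exact: geq_add _ _ _ _ _ (geq_comm _ A B) (geq_refl _ C).
exact: geq_assoc.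
Qed.

Lemma geq_swap4 TB A B C D : geq TB (gadd (gadd A B) (gadd C D)) (gadd (gadd A C) (gadd B D)).
Proof.
eapply geq_trans; first exact: geq_assoc.
eapply geq_trans; first exact: geq_add _ _ _ _ _ (geq_refl _ A) (geq_lc _ B C D).
exact: geq_sym _ _ _ (geq_assoc _ _ _ _).
Qed.

Fixpoint sumh (ks : seq nat) : game :=
  match ks with [::] => g0 | k :: ks' => gadd (halfpow k) (sumh ks') end.

Lemma K4 TB ks : geq TB (gadd (sumh ks) (gconj (sumh ks))) g0.
Proof.
elim: ks => [|k ks IH]; first exact: geq_zero.
rewrite /=.
rewrite gconj_add.
eapply geq_trans; first exact: geq_swap4.
eapply geq_trans; first exact: geq_add _ _ _ _ _ (K3 TB k) IH.
exact: geq_zero.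
Qed.

Lemma out_g0F TB : outcome TB g0 0 false.
Proof.
rewrite outcomeE; apply/hasP; exists 0; first by rewrite mem_iota.
apply/allP => r _; rewrite /resv.
by case: ltngtP.
Qed.

Lemma out_g0T TB : outcome TB g0 0 true = false.
Proof.
rewrite outcomeE /= /resv /= /LMv /=.
by case: TB.
Qed.

Lemma K5 TB k : outcome TB (halfpow k) 0 true.
Proof.
have Hle : le_st 0 false 0 true by [].
have := H2 k Hle (leq0n TB) (out_g0F TB).
exact: (sim_o (leq0n TB) (proj1 (sim_addg0 _))).
Qed.

Lemma K6 TB k : outcome TB (gadd (halfpow k) (hb k.+1)) 0 true.
Proof.
have Hle : le_st 0 false 0 true by [].
case: (SE TB k.+1) => HS _.
have := HS k (ltnSn k) g0 0 false 0 true Hle (leq0n TB) (out_g0F TB).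
rewrite /Y; apply: (sim_o (leq0n TB)).
exact: sim_add (sim_refl _) (proj1 (sim_addg0 _)).
Qed.

Definition mu (ks : seq nat) := sumn (map S ks).

Lemma left_char TB ks L : List.In L (leftOpts (sumh ks)) ->
  exists k ks', geq TB L (sumh ks') /\ geq TB (sumh ks) (gadd (halfpow k) (sumh ks')) /\ mu ks' < mu ks.
Proof.
elim: ks L => [|k ks IH] L //=.
rewrite [X in List.In _ (leftOpts X)]gaddE => /In_app_map [[z [Hz ->]]|[L' [HL' ->]]].
- move: Hz; rewrite hp_left => /In1 ->.
  exists k, ks; split; first exact: geq_zero.
  by split; [exact: geq_refl|rewrite /mu /=; lia].
- case: (IH L' HL') => k' [ks'' [E1 [E2 Hmu]]].
  exists k', (k :: ks''); split; first exact: geq_add _ _ _ _ _ (geq_refl _ _) E1.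
  split; last by move: Hmu; rewrite /mu /=; lia.
  eapply geq_trans; first exact: geq_add _ _ _ _ _ (geq_refl _ _) E2.
  exact: geq_lc.
Qed.

Lemma right_char TB ks R : List.In R (rightOpts (sumh ks)) ->
  exists k ks', geq TB R (sumh (k :: ks')) /\ geq TB (sumh ks) (gadd (halfpow k.+1) (sumh ks')) /\ mu (k :: ks') < mu ks.
Proof.
elim: ks R => [|k ks IH] R //=.
rewrite [X in List.In _ (rightOpts X)]gaddE => /In_app_map [[z [Hz ->]]|[R' [HR' ->]]].
- case: k Hz => [|k]; first by rewrite hp_right0.
  rewrite hp_rightS => /In1 ->.
  exists k, ks; split; first exact: geq_refl.
  by split; [exact: geq_refl|rewrite /mu /=; lia].
- case: (IH R' HR') => k' [ks'' [E1 [E2 Hmu]]].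
  exists k', (k :: ks''); split.
    eapply geq_trans; first exact: geq_add _ _ _ _ _ (geq_refl _ _) E1.
    exact: geq_lc.
  split; last by move: Hmu; rewrite /mu /=; lia.
  eapply geq_trans; first exact: geq_add _ _ _ _ _ (geq_refl _ _) E2.
  exact: geq_lc.
Qed.

Lemma SL TB k ks : ~ gge TB (sumh ks) (gadd (halfpow k) (sumh ks)).
Proof.
move=> H; have := H (gconj (sumh ks)) 0 true (leq0n TB).
have E1 : geq TB (gadd (gadd (halfpow k) (sumh ks)) (gconj (sumh ks))) (gadd (halfpow k) g0).
  eapply geq_trans; first exact: geq_assoc.
  exact: geq_add _ _ _ _ _ (geq_refl _ _) (K4 TB ks).
rewrite (geq_out _ _ _ _ _ (leq0n TB) E1) (geq_out _ _ _ _ _ (leq0n TB) (K4 TB ks)) out_g0T.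
move=> H'; apply: notF; apply: H'.
by rewrite (geq_out _ _ _ _ _ (leq0n TB) (geq_zero_r _ _)) K5.
Qed.

Lemma SR TB k ks : ~ gge TB (gadd (halfpow k.+1) (sumh ks)) (gadd (halfpow k) (sumh ks)).
Proof.
move=> H; have := H (gconj (sumh (k.+1 :: ks))) 0 true (leq0n TB).
have E2 := K4 TB (k.+1 :: ks); simpl sumh in E2.
rewrite (geq_out _ _ _ _ _ (leq0n TB) E2) out_g0T.
have E1 : geq TB (gadd (gadd (halfpow k) (sumh ks)) (gconj (sumh (k.+1 :: ks))))
                 (gadd (gadd (halfpow k) (hb k.+1)) g0).
  change (sumh (k.+1 :: ks)) with (gadd (halfpow k.+1) (sumh ks)); rewrite gconj_add.
  eapply geq_trans; first exact: geq_swap4.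
  exact: geq_add _ _ _ _ _ (geq_refl _ _) (K4 TB ks).
rewrite (geq_out _ _ _ _ _ (leq0n TB) E1) (geq_out _ _ _ _ _ (leq0n TB) (geq_zero_r _ _)) K6.
by move=> /(_ isT).
Qed.

Lemma sumh_number TB : forall n ks, mu ks <= n -> isNumber TB (sumh ks).
Proof.
elim=> [|n IH] ks Hmu.
- case: ks Hmu => [|k ks] Hmu; last by rewrite /mu /= in Hmu; lia.
  apply: (@isNumber_intro TB g0 g0 (geq_refl _ _)) => //= x [].
- apply: (@isNumber_intro TB (sumh ks) (sumh ks) (geq_refl _ _)).
  + move=> L HL; case: (left_char TB ks L HL) => k [ks' [E1 [E2 Hm]]].
    apply: (isNumber_geq _ _ _ (IH ks' _) E1); lia.
  + move=> R HR; case: (right_char TB ks R HR) => k [ks' [E1 [E2 Hm]]].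
    apply: (isNumber_geq _ _ _ (IH (k :: ks') _) E1); lia.
  + move=> L HL; case: (left_char TB ks L HL) => k [ks' [E1 [E2 Hm]]].
    apply: (ggt_geq _ _ _ _ _ (geq_sym _ _ _ E2) (geq_sym _ _ _ E1)).
    split; last exact: SL.
    eapply gge_trans; first exact: gge_addr _ _ _ _ (K1 TB k).
    by case: (geq_zero TB (sumh ks')).
  + move=> R HR; case: (right_char TB ks R HR) => k [ks' [E1 [E2 Hm]]].
    apply: (ggt_geq _ _ _ _ _ (geq_sym _ _ _ E1) (geq_sym _ _ _ E2)).
    split; last exact: SR.
    exact: gge_addr _ _ _ _ (K2 TB k).
Qed.

Lemma ncopies_sumh TB m k : geq TB (ncopies m (halfpow k)) (sumh (nseq m k)).
Proof.
elim: m => [|m IH]; first exact: geq_refl.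
case: m IH => [|m] IH.
- exact: geq_sym _ _ _ (geq_zero_r _ _).
- change (ncopies m.+2 (halfpow k)) with (gadd (ncopies m.+1 (halfpow k)) (halfpow k)).
  change (sumh (nseq m.+2 k)) with (gadd (halfpow k) (sumh (nseq m.+1 k))).
  eapply geq_trans; first exact: geq_add _ _ _ _ _ IH (geq_refl _ _).
  exact: geq_comm.
Qed.

Lemma ggt_conj TB A B : ggt TB A B -> ggt TB (gconj B) (gconj A).
Proof.
case=> H1 H2; split; first exact: gge_conj.
by move=> H3; apply: H2; have := gge_conj _ _ _ H3; rewrite !gconjK.
Qed.

Lemma conj_left H : leftOpts (gconj H) = map gconj (rightOpts H).
Proof. by case: H. Qed.
Lemma conj_right H : rightOpts (gconj H) = map gconj (leftOpts H).
Proof. by case: H. Qed.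

Lemma isNumber_conj TB G : isNumber TB G -> isNumber TB (gconj G).
Proof.
elim=> {}G H [E1 E2] HLn IHL HRn IHR HLt HRt.
apply: (@isNumber_intro TB (gconj G) (gconj H)).
- by split; apply: gge_conj.
- by rewrite conj_left => x /List.in_map_iff [y [<- Hy]]; apply: IHR.
- by rewrite conj_right => x /List.in_map_iff [y [<- Hy]]; apply: IHL.
- by rewrite conj_left => x /List.in_map_iff [y [<- Hy]]; apply: ggt_conj; apply: HRt.
- by rewrite conj_right => x /List.in_map_iff [y [<- Hy]]; apply: ggt_conj; apply: HLt.
Qed.

Theorem mainTheorem19 (TB : nat) (n : int) (k : nat) (hk : (0 < k)%N) :
  isNumber TB (dyadic n k).
Proof.
case: n => m /=.
- apply: (isNumber_geq _ _ _ (sumh_number TB (mu (nseq m k)) _ (leqnn _))).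
  exact: ncopies_sumh.
- apply: isNumber_conj.
  apply: (isNumber_geq _ _ _ (sumh_number TB (mu (nseq m.+1 k)) _ (leqnn _))).
  exact: ncopies_sumh.
Qed.
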